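(* Let $m\ge 1$. The Lie superalgebra $H_m$ is capable if and only if $m=1$.
   Context: All algebras are over a field $\mathbb{F}$ of characteristic $\neq 2,3$. $H_m$ is the Lie superalgebra with even basis $x_1,\dots,x_m$, odd basis $y_1,\dots,y_m,z$, and nonzero brackets $[x_j,y_j]=z$ ($1\le j\le m$). A Lie superalgebra $L$ is capable if $L\cong H/Z(H)$ for some Lie superalgebra $H$. *)

(* Defs.v *)
From HB Require Import structures.
From mathcomp Require Import all_boot all_order all_algebra.
Set Implicit Arguments. Unset Strict Implicit. Unset Printing Implicit Defensive.
Import Order.TTheory GRing.Theory Num.Theory.
Local Open Scope ring_scope.

(* Data of a (possibly infinite-dimensional) Z/2-graded algebra over F:
   a vector space [lsa_car], the projection [lsa_p0] onto the even part
   (the odd part is the kernel of [lsa_p0]), and a bracket [lsa_br]. *)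
Record lsa_data (F : fieldType) := LSAData {
  lsa_car :> lmodType F;
  lsa_p0 : lsa_car -> lsa_car;
  lsa_br : lsa_car -> lsa_car -> lsa_car }.

Definition homog (F : fieldType) (L : lsa_data F) (b : bool) (x : L) : Prop :=
  if b then lsa_p0 x = 0 else lsa_p0 x = x.

Definition is_lsa (F : fieldType) (L : lsa_data F) : Prop :=
      (forall (a : F) (x y : L), lsa_p0 (a *: x + y) = a *: lsa_p0 x + lsa_p0 y) /\
      (forall x : L, lsa_p0 (lsa_p0 x) = lsa_p0 x) /\
      (forall (a : F) (x y z : L), lsa_br (a *: x + y) z = a *: lsa_br x z + lsa_br y z) /\
      (forall (a : F) (x y z : L), lsa_br x (a *: y + z) = a *: lsa_br x y + lsa_br x z) /\
      (forall (a b : bool) (x y : L), homog a x -> homog b y -> homog (a (+) b) (lsa_br x y)) /\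
      (forall (a b : bool) (x y : L), homog a x -> homog b y ->
          lsa_br x y = - (((-1) ^+ (a && b) : F) *: lsa_br y x)) /\
      (forall (a b : bool) (x y z : L), homog a x -> homog b y ->
          lsa_br x (lsa_br y z) =
          lsa_br (lsa_br x y) z + ((-1) ^+ (a && b) : F) *: lsa_br y (lsa_br x z)).

Definition is_lsa_hom (F : fieldType) (L M : lsa_data F) (f : L -> M) : Prop :=
  [/\ (forall (a : F) (x y : L), f (a *: x + y) = a *: f x + f y),
      (forall x : L, f (lsa_p0 x) = lsa_p0 (f x)) &
      (forall x y : L, f (lsa_br x y) = lsa_br (f x) (f y))].

Definition central (F : fieldType) (H : lsa_data F) (x : H) : Prop :=
  forall y : H, lsa_br x y = 0.

(* L is capable iff L ~= H / Z(H) for some Lie superalgebra H; equivalently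
   (first isomorphism theorem) there is a surjective homomorphism H -> L
   whose kernel is exactly Z(H). *)
Definition capable (F : fieldType) (L : lsa_data F) : Prop :=
  exists (H : lsa_data F) (f : H -> L),
    [/\ is_lsa H, is_lsa_hom f, (forall u : L, exists x : H, f x = u) &
        (forall x : H, f x = 0 <-> central x)].

(* The Heisenberg Lie superalgebra H_m, realised on F^(2m+1):
   coordinate j < m is x_j (even), coordinate m + j is y_j (odd),
   coordinate 2m is z (odd).  Only nonzero brackets: [x_j, y_j] = z
   (and hence [y_j, x_j] = -z). *)
Section Hm.
Variables (F : fieldType) (m : nat).
Definition Hm_car : lmodType F := 'rV[F]_(m.*2.+1).
Definition Hm_x (j : nat) : 'I_(m.*2.+1) := inord j.
Definition Hm_y (j : nat) : 'I_(m.*2.+1) := inord (m + j).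
Definition Hm_z : 'I_(m.*2.+1) := inord m.*2.
Definition Hm_p0 (u : Hm_car) : Hm_car :=
  \row_i (if (i < m)%N then (u : 'rV[F]_(m.*2.+1)) 0 i else 0).
Definition Hm_br (u v : Hm_car) : Hm_car :=
  (\sum_(j < m) ((u : 'rV[F]_(m.*2.+1)) 0 (Hm_x j) * (v : 'rV[F]_(m.*2.+1)) 0 (Hm_y j)
                 - (u : 'rV[F]_(m.*2.+1)) 0 (Hm_y j) * (v : 'rV[F]_(m.*2.+1)) 0 (Hm_x j)))
    *: (delta_mx 0 Hm_z : 'rV[F]_(m.*2.+1)).
End Hm.

Definition Hm (F : fieldType) (m : nat) : lsa_data F :=
  @LSAData F (Hm_car F m) (@Hm_p0 F m) (@Hm_br F m).

(* Main.v *)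
Require Import Defs.
From HB Require Import structures.
From mathcomp Require Import all_boot all_order all_algebra.
From mathcomp Require Import ring zify.
Import GRing.Theory.
Local Open Scope ring_scope.
Set Implicit Arguments. Unset Strict Implicit.

Lemma dbl_self (F : fieldType) (V : lmodType F) (x : V) : x = x + x -> x = 0.
Proof. by move=> h; apply/(addrI x); rewrite addr0 -h. Qed.

Section Gen.
Variables (F : fieldType) (H : lsa_data F) (hH : is_lsa H).
Local Notation br := (@lsa_br F H).
Local Notation p0 := (@lsa_p0 F H).

Lemma brDl x y z : br (x + y) z = br x z + br y z.
Proof. have [_ [_ [hl _]]] := hH. by have := hl 1 x y z; rewrite !scale1r. Qed.
Lemma brDr x y z : br x (y + z) = br x y + br x z.
Proof. have [_ [_ [_ [hr _]]]] := hH. by have := hr 1 x y z; rewrite !scale1r. Qed.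
Lemma br0l z : br 0 z = 0.
Proof. by apply: dbl_self; rewrite -brDl addr0. Qed.
Lemma br0r z : br z 0 = 0.
Proof. by apply: dbl_self; rewrite -brDr addr0. Qed.
Lemma brZl a x z : br (a *: x) z = a *: br x z.
Proof. have [_ [_ [hl _]]] := hH. by have := hl a x 0 z; rewrite !addr0 br0l addr0. Qed.
Lemma brZr a x z : br x (a *: z) = a *: br x z.
Proof. have [_ [_ [_ [hr _]]]] := hH. by have := hr a x z 0; rewrite !addr0 br0r addr0. Qed.
Lemma brNl x z : br (- x) z = - br x z.
Proof. by rewrite -scaleN1r brZl scaleN1r. Qed.
Lemma brNr x z : br x (- z) = - br x z.
Proof. by rewrite -scaleN1r brZr scaleN1r. Qed.
Lemma brBl x y z : br (x - y) z = br x z - br y z.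
Proof. by rewrite brDl brNl. Qed.
Lemma brBr x y z : br x (y - z) = br x y - br x z.
Proof. by rewrite brDr brNr. Qed.

Lemma p0D x y : p0 (x + y) = p0 x + p0 y.
Proof. have [h _] := hH. by have := h 1 x y; rewrite !scale1r. Qed.
Lemma p00 : p0 0 = 0.
Proof. by apply: dbl_self; rewrite -p0D addr0. Qed.
Lemma p0N x : p0 (- x) = - p0 x.
Proof. have [h _] := hH. by have := h (-1) x 0; rewrite !addr0 p00 addr0 !scaleN1r. Qed.
Lemma p0B x y : p0 (x - y) = p0 x - p0 y.
Proof. by rewrite p0D p0N. Qed.

Lemma homog_even (x : H) : homog false (p0 x).
Proof. have [_ [h _]] := hH. exact: h. Qed.
Lemma homog_odd (x : H) : homog true (x - p0 x).
Proof. have [_ [h _]] := hH. by rewrite /homog p0B h subrr. Qed.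

Lemma sep b (u v : H) : homog b u -> homog (~~ b) v -> u + v = 0 -> u = 0 /\ v = 0.
Proof.
move=> hu hv huv; have hp := congr1 p0 huv; rewrite p0D p00 in hp.
case: b hu hv => /= hu hv; rewrite hu hv in hp.
  by rewrite add0r in hp; split=> //; move: huv; rewrite hp addr0.
by rewrite addr0 in hp; split=> //; move: huv; rewrite hp add0r.
Qed.

Lemma right_central b (y c : H) : homog b y -> central c -> br y c = 0.
Proof.
move=> hy hc.
have [_ [_ [_ [_ [hpar [hsk _]]]]]] := hH.
have ec : c = p0 c + (c - p0 c) by rewrite addrC subrK.
have h1 : br (p0 c) y + br (c - p0 c) y = 0 by rewrite -brDl -ec hc.
have hp1 := hpar _ _ _ _ (homog_even c) hy.
have hp2 := hpar _ _ _ _ (homog_odd c) hy.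
rewrite addFb in hp1; rewrite addTb in hp2.
have [e1 e2] := sep hp1 hp2 h1.
rewrite ec brDr (hsk _ _ _ _ hy (homog_even c)) (hsk _ _ _ _ hy (homog_odd c)).
by rewrite e1 e2 !scaler0 oppr0 addr0.
Qed.

End Gen.

Section Hom.
Variables (F : fieldType) (L M : lsa_data F) (f : L -> M) (hf : is_lsa_hom f).
Lemma fD x y : f (x + y) = f x + f y.
Proof. have [h _ _] := hf. by have := h 1 x y; rewrite !scale1r. Qed.
Lemma f0 : f 0 = 0.
Proof. by apply: dbl_self; rewrite -fD addr0. Qed.
Lemma fZ a x : f (a *: x) = a *: f x.
Proof. have [h _ _] := hf. by have := h a x 0; rewrite !addr0 f0 addr0. Qed.
Lemma fB x y : f (x - y) = f x - f y.
Proof. by rewrite fD -scaleN1r fZ scaleN1r. Qed.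
End Hom.

Lemma inord_eq n a b : (a < n.+1)%N -> (b < n.+1)%N ->
  ((inord a : 'I_n.+1) == inord b) = (a == b).
Proof. by move=> ha hb; apply/eqP/eqP => [/(congr1 (@nat_of_ord _))|->//]; rewrite !inordK. Qed.

Lemma delta_inord (F : fieldType) n p q : (p < n.+1)%N -> (q < n.+1)%N ->
  (delta_mx 0 (inord p) : 'rV[F]_n.+1) 0 (inord q) = (q == p)%:R.
Proof. by move=> hp hq; rewrite mxE eqxx /= inord_eq. Qed.

Section HmFacts.
Variables (F : fieldType) (m : nat).
Local Notation V := 'rV[F]_(m.*2.+1).
Definition ex a : V := delta_mx 0 (Hm_x m a).
Definition ey a : V := delta_mx 0 (Hm_y m a).
Definition ez : V := delta_mx 0 (Hm_z m).

Lemma bx j : (j < m)%N -> (j < m.*2.+1)%N. Proof. rewrite -addnn; lia. Qed.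
Lemma by_ j : (j < m)%N -> (m + j < m.*2.+1)%N. Proof. rewrite -addnn; lia. Qed.

Lemma Hm_br_x a (v : V) : (a < m)%N -> Hm_br (ex a : Hm_car F m) v = v 0 (Hm_y m a) *: ez.
Proof.
move=> ha; rewrite /Hm_br; congr (_ *: _).
rewrite (bigD1 (Ordinal ha)) //= big1 ?addr0.
  rewrite /ex /Hm_x /Hm_y !delta_inord; try (by rewrite -addnn; lia); rewrite eqxx.
  have -> : (m + a == a)%N = false by apply/eqP; lia.
  by rewrite mul1r mul0r subr0.
move=> j hj; have hjm := ltn_ord j.
rewrite /ex /Hm_x /Hm_y !delta_inord; try (by rewrite -addnn; lia).
case: eqP => [e|_]; first by case/eqP: hj; apply: val_inj.
have -> : ((m + j)%N == a) = false by apply/eqP; lia.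
by rewrite !mul0r subrr.
Qed.

Lemma Hm_br_y a (v : V) : (a < m)%N -> Hm_br (ey a : Hm_car F m) v = - v 0 (Hm_x m a) *: ez.
Proof.
move=> ha; rewrite /Hm_br; congr (_ *: _).
rewrite (bigD1 (Ordinal ha)) //= big1 ?addr0.
  rewrite /ey /Hm_x /Hm_y !delta_inord; try (by rewrite -addnn; lia); rewrite eqxx.
  have -> : (a == m + a)%N = false by apply/eqP; lia.
  by rewrite mul1r mul0r sub0r.
move=> j hj; have hjm := ltn_ord j.
rewrite /ey /Hm_x /Hm_y !delta_inord; try (by rewrite -addnn; lia).
case: eqP => [e|_]; first lia.
case: eqP => [e|_]; first by case/eqP: hj; apply: val_inj => /=; lia.
by rewrite !mul0r subrr.
Qed.

Lemma ex_entry_y a b : (a < m)%N -> (b < m)%N -> ex a 0 (Hm_y m b) = 0.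
Proof.
move=> ha hb; rewrite /ex /Hm_x /Hm_y delta_inord; try (by rewrite -addnn; lia).
by have -> : (m + b == a)%N = false by apply/eqP; lia.
Qed.
Lemma ey_entry_x a b : (a < m)%N -> (b < m)%N -> ey a 0 (Hm_x m b) = 0.
Proof.
move=> ha hb; rewrite /ey /Hm_x /Hm_y delta_inord; try (by rewrite -addnn; lia).
by have -> : (b == m + a)%N = false by apply/eqP; lia.
Qed.
Lemma ex_entry_x a b : (a < m)%N -> (b < m)%N -> ex a 0 (Hm_x m b) = (b == a)%:R.
Proof. by move=> ha hb; rewrite /ex /Hm_x delta_inord; try (by rewrite -addnn; lia). Qed.
Lemma ey_entry_y a b : (a < m)%N -> (b < m)%N -> ey a 0 (Hm_y m b) = (b == a)%:R.
Proof.
move=> ha hb; rewrite /ey /Hm_y delta_inord; try (by rewrite -addnn; lia).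
by rewrite eqn_add2l.
Qed.

Lemma ez_neq0 : ez != 0.
Proof.
apply/eqP => /rowP /(_ (Hm_z m)); rewrite !mxE !eqxx /=.
by move/eqP; rewrite oner_eq0.
Qed.

Lemma Hm_p0_x a : (a < m)%N -> Hm_p0 (ex a : Hm_car F m) = ex a.
Proof.
move=> ha; apply/rowP => i; rewrite /ex !mxE; case: ifP => // hi.
case: (eqVneq i (Hm_x m a)) => [e|]; last by rewrite andbF.
by move: hi; rewrite e /Hm_x inordK ?ha //; lia.
Qed.

Lemma Hm_p0_y a : (a < m)%N -> Hm_p0 (ey a : Hm_car F m) = 0.
Proof.
move=> ha; apply/rowP => i; rewrite /ey !mxE; case: ifP => // hi.
case: (eqVneq i (Hm_y m a)) => [e|]; last by rewrite andbF.
by move: hi; rewrite e /Hm_y inordK; lia.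
Qed.
End HmFacts.

Lemma not_capable_ge2 (F : fieldType) m : (2 <= m)%N -> ~ capable (Hm F m).
Proof.
move=> hm [H [f [hH hf surj ker]]].
have [flin fp0 fbr] := hf.
have hJ := hH.2.2.2.2.2.2.
have h0 : (0 < m)%N by lia.
have h1 : (1 < m)%N by lia.
have pe : forall u : Hm F m, Hm_p0 u = u -> exists X : H, homog false X /\ f X = u.
  move=> u hu; have [X' hX'] := surj u; exists (lsa_p0 X'); split; first exact: homog_even.
  by rewrite fp0 hX'.
have po : forall u : Hm F m, Hm_p0 u = 0 -> exists X : H, homog true X /\ f X = u.
  move=> u hu; have [X' hX'] := surj u; exists (X' - lsa_p0 X'); split; first exact: homog_odd.
  by rewrite (fB hf) fp0 hX' /= hu subr0.
have [X0 [hX0 fX0]] := pe _ (Hm_p0_x F h0).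
have [X1 [hX1 fX1]] := pe _ (Hm_p0_x F h1).
have [Y0 [hY0 fY0]] := po _ (Hm_p0_y F h0).
have [Y1 [hY1 fY1]] := po _ (Hm_p0_y F h1).
have cen : forall x : H, f x = 0 -> central x by move=> x hx; apply/ker.
set Z := lsa_br X0 Y0.
have fZe : f Z = ez F m by rewrite /Z fbr fX0 fY0 /= Hm_br_x // ey_entry_y // eqxx scale1r.
have fZ1 : f (lsa_br X1 Y1) = ez F m.
  by rewrite fbr fX1 fY1 /= Hm_br_x // ey_entry_y // eqxx scale1r.
have cc : central (Z - lsa_br X1 Y1) by apply: cen; rewrite (fB hf) fZe fZ1 subrr.
have c01 : central (lsa_br X0 X1).
  by apply: cen; rewrite fbr fX0 fX1 /= Hm_br_x // ex_entry_y // scale0r.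
have c0y1 : central (lsa_br X0 Y1).
  by apply: cen; rewrite fbr fX0 fY1 /= Hm_br_x // ey_entry_y // scale0r.
have cy0x1 : central (lsa_br Y0 X1).
  by apply: cen; rewrite fbr fY0 fX1 /= Hm_br_y // ex_entry_x // oppr0 scale0r.
have cy0y1 : central (lsa_br Y0 Y1).
  by apply: cen; rewrite fbr fY0 fY1 /= Hm_br_y // ey_entry_x // oppr0 scale0r.
have eZ : Z = (Z - lsa_br X1 Y1) + lsa_br X1 Y1 by rewrite subrK.
have X0Z : lsa_br X0 Z = 0.
  rewrite eZ (brDr hH) (right_central hH hX0 cc) add0r (hJ _ _ _ _ Y1 hX0 hX1).
  by rewrite c01 (right_central hH hX1 c0y1) scaler0 addr0.
have Y0Z : lsa_br Y0 Z = 0.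
  rewrite eZ (brDr hH) (right_central hH hY0 cc) add0r (hJ _ _ _ _ Y1 hY0 hX1).
  by rewrite cy0x1 (right_central hH hX1 cy0y1) scaler0 addr0.
have cZ : central Z.
  move=> w.
  have jw := hJ _ _ _ _ w hX0 hY0; rewrite /= expr0 scale1r -/Z in jw.
  have -> : lsa_br Z w = lsa_br X0 (lsa_br Y0 w) - lsa_br Y0 (lsa_br X0 w).
    by rewrite jw addrK.
  set lam := - ((f w : 'rV[F]_(m.*2.+1)) 0 (Hm_x m 0)).
  set mu := (f w : 'rV[F]_(m.*2.+1)) 0 (Hm_y m 0).
  have c1 : central (lsa_br Y0 w - lam *: Z).
    by apply: cen; rewrite (fB hf) (fZ hf) fbr fY0 fZe /= Hm_br_y // subrr.
  have c2 : central (lsa_br X0 w - mu *: Z).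
    by apply: cen; rewrite (fB hf) (fZ hf) fbr fX0 fZe /= Hm_br_x // subrr.
  have e1 : lsa_br Y0 w = (lsa_br Y0 w - lam *: Z) + lam *: Z by rewrite subrK.
  have e2 : lsa_br X0 w = (lsa_br X0 w - mu *: Z) + mu *: Z by rewrite subrK.
  rewrite e1 e2 (brDr hH X0 (lsa_br Y0 w - lam *: Z)) (brDr hH Y0 (lsa_br X0 w - mu *: Z)) (right_central hH hX0 c1) (right_central hH hY0 c2).
  by rewrite !(brZr hH) X0Z Y0Z !scaler0 !addr0 subrr.
have := (ker Z).2 cZ; rewrite fZe => /eqP; apply/negP; exact: ez_neq0.
Qed.

Section H4.
Variable F : fieldType.
Local Notation V4 := 'rV[F]_4.
Definition c4 (u : V4) k := u 0 (inord k).
Definition H4p0 (u : V4) : V4 := \row_(i < 4) (if (i : nat) == 0%N then c4 u 0 else 0).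
Definition H4br (u v : V4) : V4 := \row_(i < 4)
  (if (i : nat) == 2%N then c4 u 0 * c4 v 1 - c4 u 1 * c4 v 0
   else if (i : nat) == 3%N then c4 u 0 * c4 v 2 - c4 u 2 * c4 v 0 else 0).
Definition H4 : lsa_data F := @LSAData F (V4 : lmodType F) H4p0 H4br.

Lemma c4_p0 u k : (k < 4)%N -> c4 (H4p0 u) k = if k == 0%N then c4 u 0 else 0.
Proof. by move=> hk; rewrite /c4 mxE inordK. Qed.
Lemma c4_br u v k : (k < 4)%N -> c4 (H4br u v) k =
  (if k == 2%N then c4 u 0 * c4 v 1 - c4 u 1 * c4 v 0
   else if k == 3%N then c4 u 0 * c4 v 2 - c4 u 2 * c4 v 0 else 0).
Proof. by move=> hk; rewrite /c4 mxE inordK. Qed.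
Lemma c4_lin a (x y : V4) k : c4 (a *: x + y) k = a * c4 x k + c4 y k.
Proof. by rewrite /c4 !mxE. Qed.
Lemma c4D (x y : V4) k : c4 (x + y) k = c4 x k + c4 y k.
Proof. by rewrite /c4 !mxE. Qed.
Lemma c4Z a (x : V4) k : c4 (a *: x) k = a * c4 x k.
Proof. by rewrite /c4 !mxE. Qed.
Lemma c4N (x : V4) k : c4 (- x) k = - c4 x k.
Proof. by rewrite /c4 !mxE. Qed.
Lemma c40 k : c4 0 k = 0.
Proof. by rewrite /c4 !mxE. Qed.
Lemma ext4 (u v : V4) : (forall k, (k < 4)%N -> c4 u k = c4 v k) -> u = v.
Proof. by move=> h; apply/rowP => i; rewrite -(inord_val i); apply: h. Qed.

Ltac coords := apply: ext4 => -[|[|[|[|k]]]] hk //; do 4 (rewrite ?c4D ?c4Z ?c4N ?c40 ?c4_br ?c4_p0 //=).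

Ltac fin := rewrite ?expr0 ?expr1; coords;
  repeat match goal with H : c4 _ _ = 0 |- _ => rewrite ?H; clear H end; ring.

Lemma even4 (x : V4) : H4p0 x = x -> [/\ c4 x 1 = 0, c4 x 2 = 0 & c4 x 3 = 0].
Proof.
move=> h; split.
- by have := congr1 (fun v => c4 v 1) h; rewrite c4_p0.
- by have := congr1 (fun v => c4 v 2) h; rewrite c4_p0.
- by have := congr1 (fun v => c4 v 3) h; rewrite c4_p0.
Qed.
Lemma odd4 (x : V4) : H4p0 x = 0 -> c4 x 0 = 0.
Proof. by move=> h; have := congr1 (fun v => c4 v 0) h; rewrite c4_p0 // /c4 mxE. Qed.

Lemma homog4 b (x : H4) : homog b x ->
  if b then c4 x 0 = 0 else [/\ c4 x 1 = 0, c4 x 2 = 0 & c4 x 3 = 0].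
Proof. by case: b => /= h; [apply: odd4 | apply: even4]. Qed.

Lemma H4_lsa : is_lsa H4.
Proof.
split; [|split; [|split; [|split; [|split; [|split]]]]] => /=.
- by move=> a x y; coords; ring.
- by move=> x; coords.
- by move=> a x y z; coords; ring.
- by move=> a x y z; coords; ring.
- move=> a b x y hx hy; have hx' := homog4 hx; have hy' := homog4 hy.
  case: a b hx' hy' {hx hy} => -[] /= hx hy; rewrite /homog /=.
  + by fin.
  + by case: hy => hy1 hy2 hy3; fin.
  + by case: hx => hx1 hx2 hx3; fin.
  + by case: hx => hx1 hx2 hx3; case: hy => hy1 hy2 hy3; fin.
- move=> a b x y hx hy; have hx' := homog4 hx; have hy' := homog4 hy.
  case: a b hx' hy' {hx hy} => -[] /= hx hy.
  + by fin.
  + by case: hy => hy1 hy2 hy3; fin.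
  + by case: hx => hx1 hx2 hx3; fin.
  + by case: hx => hx1 hx2 hx3; case: hy => hy1 hy2 hy3; fin.
- move=> a b x y z hx hy; have hx' := homog4 hx; have hy' := homog4 hy.
  case: a b hx' hy' {hx hy} => -[] /= hx hy.
  + by fin.
  + by case: hy => hy1 hy2 hy3; fin.
  + by case: hx => hx1 hx2 hx3; fin.
  + by case: hx => hx1 hx2 hx3; case: hy => hy1 hy2 hy3; fin.
Qed.
End H4.

Section Cap1.
Variable F : fieldType.
Local Notation V3 := 'rV[F]_3.
Definition c3 (u : V3) k := u 0 (inord k).
Lemma ext3 (u v : V3) : (forall k, (k < 3)%N -> c3 u k = c3 v k) -> u = v.
Proof. by move=> h; apply/rowP => i; rewrite -(inord_val i); apply: h. Qed.
Lemma c3D (x y : V3) k : c3 (x + y) k = c3 x k + c3 y k.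
Proof. by rewrite /c3 !mxE. Qed.
Lemma c3Z a (x : V3) k : c3 (a *: x) k = a * c3 x k.
Proof. by rewrite /c3 !mxE. Qed.
Lemma c30 k : c3 0 k = 0.
Proof. by rewrite /c3 !mxE. Qed.

Definition f4 (u : H4 F) : Hm F 1 := (\row_(i < 3) c4 u i : V3).
Lemma c3_f4 u k : (k < 3)%N -> c3 (f4 u) k = c4 u k.
Proof. by move=> hk; rewrite /c3 mxE inordK. Qed.
Lemma c3_p0 (u : V3) k : (k < 3)%N -> c3 (Hm_p0 (u : Hm_car F 1)) k = if (k < 1)%N then c3 u k else 0.
Proof. by move=> hk; rewrite /c3 mxE inordK. Qed.
Lemma c3_br (u v : V3) k : (k < 3)%N ->
  c3 (Hm_br (u : Hm_car F 1) v) k = (c3 u 0 * c3 v 1 - c3 u 1 * c3 v 0) * (k == 2)%:R.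
Proof.
move=> hk; rewrite /Hm_br big_ord1 /c3 mxE /Hm_z /Hm_x /Hm_y delta_inord //=.
Qed.
End Cap1.

Section Cap1b.
Variable F : fieldType.
Ltac coords3 := apply: ext3 => -[|[|[|k]]] hk //;
  do 4 (rewrite ?c3D ?c3Z ?c30 ?c3_br ?c3_p0 ?c3_f4 ?c4D ?c4Z ?c4N ?c40 ?c4_br ?c4_p0 //=).

Definition e4 k : 'rV[F]_4 := \row_(i < 4) ((i : nat) == k)%:R.
Lemma c4_e4 k j : (j < 4)%N -> c4 (e4 k) j = (j == k)%:R.
Proof. by move=> hj; rewrite /c4 mxE inordK. Qed.

Lemma capable1 : capable (Hm F 1).
Proof.
exists (H4 F), (@f4 F); split.
- exact: H4_lsa.
- split.
  + by move=> a x y; coords3.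
  + by move=> x; coords3.
  + move=> x y; change (f4 (H4br x y) = Hm_br (f4 x) (f4 y)).
    apply: ext3 => -[|[|[|k]]] hk //; rewrite c3_br // !c3_f4 // c4_br //=; ring.
- move=> u; exists (\row_(i < 4) (if (i < 3)%N then c3 u i else 0)).
  by coords3; rewrite /c4 mxE inordK.
- move=> x; split.
  + move=> hx.
    have h0 : c4 x 0 = 0 by have := congr1 (fun v => c3 v 0) hx; rewrite c3_f4 // c30.
    have h1 : c4 x 1 = 0 by have := congr1 (fun v => c3 v 1) hx; rewrite c3_f4 // c30.
    have h2 : c4 x 2 = 0 by have := congr1 (fun v => c3 v 2) hx; rewrite c3_f4 // c30.
    move=> y /=; apply: ext4 => -[|[|[|[|k]]]] hk //;
      do 4 (rewrite ?c4D ?c4Z ?c4N ?c40 ?c4_br ?c4_p0 //=); rewrite ?h0 ?h1 ?h2; ring.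
  + move=> hx.
    have h1 := congr1 (fun v => c4 v 2) (hx (e4 1)).
    have h0 := congr1 (fun v => c4 v 2) (hx (e4 0)).
    have h2 := congr1 (fun v => c4 v 3) (hx (e4 0)).
    move: h0 h1 h2; rewrite /= !c4_br // !c4_e4 // !c40 /= => h0 h1 h2.
    coords3.
    * by move: h1; rewrite mulr1 mulr0 subr0.
    * by move: h0; rewrite mulr1 mulr0 sub0r => /eqP; rewrite oppr_eq0 => /eqP.
    * by move: h2; rewrite mulr1 mulr0 sub0r => /eqP; rewrite oppr_eq0 => /eqP.
Qed.
End Cap1b.

Unset Implicit Arguments.
Set Strict Implicit.

Theorem mainTheorem5 (F : fieldType) (hF2 : 2%N \notin [pchar F])
  (hF3 : 3%N \notin [pchar F]) (m : nat) (hm : (1 <= m)%N) :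
  capable (Hm F m) <-> m = 1%N.
Proof.
split.
- move=> hc; case: (ltnP m 2) => h; first lia.
  by case: (not_capable_ge2 h hc).
- by move=> ->; exact: capable1.
Qed.
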